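(* Let $(S,\varepsilon),(S',\varepsilon')\in\mathcal{SC}(\mathcal M)$ with $(S,\varepsilon)\le(S',\varepsilon')$ and $S'\subsetneq S$. Then $\operatorname{genus}(S',\varepsilon')<\operatorname{genus}(S,\varepsilon)$. Consequently $\mathcal{SC}(\mathcal M)$ is graded, with the degree of $(S,\varepsilon)$ equal to $\operatorname{genus}(\mathcal M)-\operatorname{genus}(S,\varepsilon)$. (In particular, for a finite graph $G$, the poset of strongly connected orientations of subgraphs is graded by $\operatorname{genus}(G)-\operatorname{genus}(H)$.)
   Context: Let $\mathcal M$ be a regular matroid on a finite ground set $E$, represented over $\mathbb R$ by a totally unimodular matrix $M$ with columns $c_e$, $e\in E$. $\operatorname{genus}(\mathcal M)=\dim\ker M$. An oriented submatroid is a pair $(S,\varepsilon)$ with $S\subseteq E$ and $\varepsilon:S\to\{\pm1\}$. It is strongly connected if for every $e\in S$ there is $w\in\mathbb Z_{\ge0}^S$ with $w_e\ge1$ and $\sum_{f\in S}w_f\varepsilon_f c_f=0$. The genus of $(S,\varepsilon)$ is $\dim\ker M_S$, where $M_S$ is the submatrix of columns indexed by $S$. $\mathcal{SC}(\mathcal M)$ is the set of strongly connected oriented submatroids, ordered by $(S,\varepsilon)\le(S',\varepsilon')$ iff $S'\subseteq S$ and $\varepsilon'=\varepsilon|_{S'}$. For a graph, the genus of a (possibly disconnected) subgraph $H$ (on all vertices) is the dimension of the kernel of its signed incidence matrix. *)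

(* Defs.v *)
From HB Require Import structures.
From mathcomp Require Import all_boot all_order all_algebra.
From mathcomp Require Import reals.
Set Implicit Arguments. Unset Strict Implicit. Unset Printing Implicit Defensive.
Import Order.TTheory GRing.Theory Num.Theory.
Local Open Scope ring_scope.

(* Ground set E = 'I_n; the matroid is represented by M : 'M[R]_(m, n),
   column c_e = col e M. *)

Definition totally_unimodular (R : realType) (m n : nat) (M : 'M[R]_(m, n)) :=
  forall (k : nat) (f : 'I_k -> 'I_m) (g : 'I_k -> 'I_n),
    \det (mxsub f g M) \in [:: 0; 1; -1].

(* Orientation: eps e = true means +1, false means -1; only its values on S
   are relevant. *)
Definition sgn (R : realType) (b : bool) : R := if b then 1 else -1.

Definition colsubset (R : realType) (m n : nat) (M : 'M[R]_(m, n))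
  (S : {set 'I_n}) : 'M[R]_(m, #|S|) :=
  colsub (fun i : 'I_#|S| => enum_val i) M.

(* dim ker of a matrix A (column kernel {x | A x = 0}) *)
Definition dimker (R : realType) (m k : nat) (A : 'M[R]_(m, k)) : nat :=
  \rank (kermx A^T).

Definition matroid_genus (R : realType) (m n : nat) (M : 'M[R]_(m, n)) : nat :=
  dimker M.

Definition osub_genus (R : realType) (m n : nat) (M : 'M[R]_(m, n))
  (S : {set 'I_n}) (eps : 'I_n -> bool) : nat :=
  dimker (colsubset M S).

Definition strongly_connected (R : realType) (m n : nat) (M : 'M[R]_(m, n))
  (S : {set 'I_n}) (eps : 'I_n -> bool) : Prop :=
  forall e, e \in S -> exists w : 'I_n -> nat,
    (1 <= w e)%N /\
    \sum_(f in S) ((w f)%:R * sgn R (eps f)) *: col f M = 0.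

Definition osub_le (n : nat) (S : {set 'I_n}) (eps : 'I_n -> bool)
  (S' : {set 'I_n}) (eps' : 'I_n -> bool) : Prop :=
  S' \subset S /\ (forall e, e \in S' -> eps' e = eps e).

(* strict order (oriented submatroids are equal iff same S and same signs on S) *)
Definition osub_lt (n : nat) (S : {set 'I_n}) (eps : 'I_n -> bool)
  (S' : {set 'I_n}) (eps' : 'I_n -> bool) : Prop :=
  osub_le S eps S' eps' /\ S' != S.

Definition sc_covers (R : realType) (m n : nat) (M : 'M[R]_(m, n))
  (S : {set 'I_n}) (eps : 'I_n -> bool)
  (S' : {set 'I_n}) (eps' : 'I_n -> bool) : Prop :=
  osub_lt S eps S' eps' /\
  ~ (exists (T : {set 'I_n}) (tau : 'I_n -> bool),
        strongly_connected M T tau /\ osub_lt S eps T tau /\ osub_lt T tau S' eps').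

Definition sc_degree (R : realType) (m n : nat) (M : 'M[R]_(m, n))
  (S : {set 'I_n}) (eps : 'I_n -> bool) : int :=
  (matroid_genus M)%:Z - (osub_genus M S eps)%:Z.

(* Main.v *)
Require Import Defs.
From HB Require Import structures.
From mathcomp Require Import all_boot all_order all_algebra.
From mathcomp Require Import reals.
From mathcomp Require Import ring lra.
Import Order.TTheory GRing.Theory Num.Theory.
Set Implicit Arguments. Unset Strict Implicit. Unset Printing Implicit Defensive.
Local Open Scope ring_scope.


Lemma scale_int n (q : 'I_n -> rat) : exists D : nat, (0 < D)%N /\ forall f, q f * D%:R \is a Num.int.
Proof.
set Dz := \prod_f denq (q f).
have Dz0 : 0 < Dz by apply: prodr_gt0 => f _; apply: denq_gt0.
exists `|Dz|%N; split; first by rewrite absz_gt0 gt_eqF.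
move=> f; rewrite natr_absz gtr0_norm // /Dz (bigD1 f) //= rmorphM /= mulrA -numqE.
by rewrite -rmorphM /= intr_int.
Qed.

Lemma int_nat (x : rat) : x \is a Num.int -> 0 <= x -> (Num.truncn x)%:R = x.
Proof. by move=> xi x0; apply: truncnK; rewrite natrEint xi x0. Qed.

Lemma argmin_ex (I : finType) (P : pred I) (F : I -> rat) i0 : P i0 ->
  exists i, P i /\ forall j, P j -> F i <= F j.
Proof.
move=> Pi0; case: (@arg_minP _ _ I i0 P F Pi0) => i Pi H; by exists i.
Qed.

Section Infra.
Variables (R : realType) (m n : nat) (M : 'M[R]_(m, n)).

Definition MQ : 'M[rat]_(m, n) := locked
  (\matrix_(i, j) (if M i j == 1 then 1 else if M i j == -1 then -1 else 0)).

Lemma MQ_map : totally_unimodular M -> map_mx (@ratr R) MQ = M.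
Proof.
move=> TU; apply/matrixP => i j; rewrite /MQ -lock !mxE.
have := TU 1%N (fun _ => i) (fun _ => j); rewrite det_mx11 mxE.
have n11 : (-1 == 1 :> R) = false by rewrite -subr_eq0 -opprD -(natrD R 1 1) oppr_eq0 pnatr_eq0.
have n01 : (0 == 1 :> R) = false by rewrite eq_sym oner_eq0.
have n0m : (0 == -1 :> R) = false by rewrite eq_sym oppr_eq0 oner_eq0.
have n1m : (1 == -1 :> R) = false by rewrite eq_sym n11.
rewrite !inE => /or3P [] /eqP ->; rewrite ?eqxx ?n11 ?n01 ?n0m ?n1m ?rmorph0 ?rmorph1 ?rmorphN1 //.
Qed.

Definition Emx (S : {set 'I_n}) : 'M[rat]_(#|S|, n) :=
  \matrix_(i, j) (enum_val i == j)%:R.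

Definition G (S : {set 'I_n}) : 'M[rat]_(#|S|, n) :=
  kermx (colsub (fun i : 'I_#|S| => enum_val i) MQ)^T *m Emx S.

Lemma EMT (S : {set 'I_n}) : Emx S *m MQ^T = (colsub (fun i : 'I_#|S| => enum_val i) MQ)^T.
Proof.
apply/matrixP => i j; rewrite !mxE (bigD1 (enum_val i)) //= big1 ?addr0.
  by rewrite !mxE eqxx mul1r.
by move=> k /negbTE nk; rewrite !mxE eq_sym nk mul0r.
Qed.

Lemma EET (S : {set 'I_n}) : Emx S *m (Emx S)^T = 1%:M.
Proof.
apply/matrixP => i j; rewrite !mxE.
rewrite (bigD1 (enum_val i)) //= big1 ?addr0.
  rewrite !mxE eqxx mul1r (inj_eq enum_val_inj) eq_sym; by case: eqP.
by move=> k /negbTE nk; rewrite !mxE eq_sym nk mul0r.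
Qed.

Lemma rank_G (S : {set 'I_n}) : \rank (G S) = \rank (kermx (colsub (fun i : 'I_#|S| => enum_val i) MQ)^T).
Proof.
apply/eqP; rewrite eqn_leq mxrankM_maxl /=.
rewrite -{1}(mulmx1 (kermx _)) -(EET S) mulmxA; exact: mxrankM_maxl.
Qed.

Lemma memG (S : {set 'I_n}) (v : 'rV[rat]_n) :
  reflect (v *m MQ^T = 0 /\ forall f, f \notin S -> v 0 f = 0) (v <= G S)%MS.
Proof.
apply: (iffP idP).
  case/submxP => D ->; rewrite /G mulmxA; set k := D *m _.
  have kK : (k <= kermx (colsub (fun i : 'I_#|S| => enum_val i) MQ)^T)%MS by apply: submxMl.
  split; first by rewrite -mulmxA EMT; apply/sub_kermxP.
  move=> f fS; rewrite !mxE big1 // => i _; rewrite !mxE.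
  case: eqP => [e|]; last by rewrite mulr0.
  by move: fS; rewrite -e enum_valP.
move=> [vK vS]; set k := v *m (Emx S)^T.
have kE : k *m Emx S = v.
  have Hk j : k 0 j = v 0 (enum_val j).
    rewrite !mxE (bigD1 (enum_val j)) //= big1 ?addr0; first by rewrite !mxE eqxx mulr1.
    by move=> g /negbTE ng; rewrite !mxE eq_sym ng mulr0.
  apply/matrixP => i f; rewrite (ord1 i) mxE.
  rewrite (eq_bigr (fun j => v 0 (enum_val j) * (enum_val j == f)%:R)); last first.
    by move=> j _; rewrite Hk mxE.
  rewrite -(big_enum_val (fun g => v 0 g * (g == f)%:R)) /=.
  case fS: (f \in S).
    rewrite (bigD1 f) //= big1 ?addr0 ?eqxx ?mulr1 // => g /andP [_ /negbTE ->].
    by rewrite mulr0.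
  rewrite big1 ?vS ?fS // => g gS; case: eqP => [e|]; last by rewrite mulr0.
  by move: gS; rewrite e fS.
rewrite -kE /G submxMr //; apply/sub_kermxP.
by rewrite -EMT mulmxA kE.
Qed.


Lemma genus_eq (S : {set 'I_n}) eps : totally_unimodular M ->
  osub_genus M S eps = \rank (G S).
Proof.
move=> TU; rewrite /osub_genus /dimker /colsubset rank_G -(MQ_map TU).
have -> : colsub (fun i : 'I_#|S| => enum_val i) (map_mx (@ratr R) MQ)
  = map_mx (@ratr R) (colsub (fun i : 'I_#|S| => enum_val i) MQ).
  by apply/matrixP => i j; rewrite !mxE.
by rewrite map_trmx -map_kermx mxrank_map.
Qed.

Definition sgnq (b : bool) : rat := if b then 1 else -1.

Definition ov (S : {set 'I_n}) (x : 'I_n -> rat) (eps : 'I_n -> bool) : 'rV[rat]_n :=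
  \row_f (if f \in S then x f * sgnq (eps f) else 0).

Lemma ratr_sgnq b : ratr (sgnq b) = sgn R b.
Proof. by case: b; rewrite /= ?rmorph1 ?rmorphN1. Qed.

Lemma wit_transfer (S : {set 'I_n}) eps (w : 'I_n -> nat) : totally_unimodular M ->
  (\sum_(f in S) ((w f)%:R * sgn R (eps f)) *: col f M = 0) <->
  (ov S (fun f => (w f)%:R) eps *m MQ^T = 0).
Proof.
move=> TU.
have E : \sum_(f in S) ((w f)%:R * sgn R (eps f)) *: col f M =
   (map_mx (@ratr R) (ov S (fun f => (w f)%:R) eps *m MQ^T))^T.
  apply/matrixP => i j; rewrite (ord1 j) !mxE summxE.
  rewrite rmorph_sum /= big_mkcond /=; apply: eq_bigr => f _.
  rewrite !mxE;
  have Mif : M i f = ratr (MQ i f) by rewrite -(MQ_map TU) mxE.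
  rewrite Mif; case: (f \in S); last by rewrite !mul0r raddf0.
  by rewrite rmorphM /= rmorphM /= ratr_nat ratr_sgnq.
rewrite E; split.
  by move/(congr1 trmx); rewrite trmxK trmx0 => /eqP; rewrite map_mx_eq0 => /eqP.
by move=> ->; rewrite raddf0 trmx0.
Qed.


Lemma pos_witness (S : {set 'I_n}) eps : strongly_connected M S eps ->
  exists W : 'I_n -> nat, (forall e, e \in S -> (1 <= W e)%N) /\
    \sum_(f in S) ((W f)%:R * sgn R (eps f)) *: col f M = 0.
Proof.
move=> SC.
suff H : forall l : seq 'I_n, {subset l <= S} -> exists W : 'I_n -> nat,
    (forall e, e \in l -> (1 <= W e)%N) /\
    \sum_(f in S) ((W f)%:R * sgn R (eps f)) *: col f M = 0.
  have [W [W1 W2]] := H (enum S) (fun x : 'I_n => fun h : x \in enum S => (ltac:(by rewrite mem_enum in h))).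
  by exists W; split => // e eS; apply: W1; rewrite mem_enum.
elim=> [_|a l IH sub].
  exists (fun _ => 0%N); split => //; rewrite big1 // => f _.
  by rewrite mul0r scale0r.
have [W [W1 W2]] := IH (fun x xl => sub x (@mem_behead _ (a :: l) x xl)).
have [w [w1 w2]] := SC a (sub a (mem_head _ _)).
exists (fun f => W f + w f)%N; split.
  move=> e; rewrite inE => /orP [/eqP ->|el]; first by rewrite addn_gt0 w1 orbT.
  by rewrite addn_gt0 W1.
rewrite (eq_bigr (fun f => ((W f)%:R * sgn R (eps f)) *: col f M +
   ((w f)%:R * sgn R (eps f)) *: col f M)); last first.
  by move=> f _; rewrite natrD mulrDl scalerDl.
by rewrite big_split /= W2 w2 addr0.
Qed.

Lemma sub_G (S S' : {set 'I_n}) : S' \subset S -> (G S' <= G S)%MS.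
Proof.
move=> sub; apply/row_subP => i.
have /memG [K Z] := row_sub i (G S').
apply/memG; split => // f fS; apply: Z.
by apply: contra fS; apply: (subsetP sub).
Qed.

Lemma part1 (S S' : {set 'I_n}) eps : totally_unimodular M ->
  strongly_connected M S eps -> S' \proper S -> (\rank (G S') < \rank (G S))%N.
Proof.
move=> TU SC /properP [sub [e eS eS']].
have [w [w1 w2]] := SC e eS.
set v := ov S (fun f => (w f)%:R) eps.
have vG : (v <= G S)%MS.
  apply/memG; split; first by apply/(wit_transfer _ _ _ TU).
  by move=> f fS; rewrite mxE (negbTE fS).
have nvG : ~~ (v <= G S')%MS.
  apply/negP => /memG [_ /(_ e eS')]; rewrite mxE eS.
  apply/eqP; rewrite mulf_eq0 negb_or pnatr_eq0 -lt0n w1 /=.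
  by case: (eps e); rewrite /sgnq ?oppr_eq0 oner_eq0.
have := mxrank_leqif_sup (sub_G sub); rewrite ltn_neqAle => [[-> ->]].
by rewrite andbT; apply: contra nvG => sS; apply: submx_trans vG sS.
Qed.


Lemma core (S S' : {set 'I_n}) eps eps' (W W' : 'I_n -> nat) (u : 'I_n -> rat) f1 f2 :
  totally_unimodular M ->
  S' \subset S -> (forall e, e \in S' -> eps' e = eps e) ->
  (forall e, e \in S -> (1 <= W e)%N) -> ov S (fun f => (W f)%:R) eps *m MQ^T = 0 ->
  (forall e, e \in S' -> (1 <= W' e)%N) -> ov S' (fun f => (W' f)%:R) eps' *m MQ^T = 0 ->
  ov S u eps *m MQ^T = 0 ->
  f1 \in S -> f1 \notin S' -> u f1 = 0 ->
  f2 \in S -> f2 \notin S' -> u f2 < 0 ->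
  exists T : {set 'I_n}, strongly_connected M T eps /\ T \subset S /\ T != S /\
     S' \subset T /\ S' != T.
Proof.
move=> TU sub agree W1 WK W'1 W'K uK f1S f1S' uf1 f2S f2S' uf2.
have [f0 [/and3P [f0S f0S' uf0] f0min]] :=
  @argmin_ex _ (fun f => [&& f \in S, f \notin S' & u f < 0])
            (fun f => (W f)%:R / - u f) f2 (ltac:(by rewrite /= f2S f2S' uf2)).
set t := (W f0)%:R / - u f0.
have t0 : 0 <= t by rewrite divr_ge0 ?ler0n // oppr_ge0 ltW.
set r := fun f => (W f)%:R + t * u f.
have r0 : r f0 = 0.
  rewrite /r /t; have : u f0 != 0 by rewrite lt_eqF.
  move=> h; field; exact: h.
have rQ f : f \in S -> f \notin S' -> 0 <= r f.
  move=> fS fS'; rewrite /r; case: (ltrP (u f) 0) => uf.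
    have := f0min f; rewrite /= fS fS' uf => /(_ isT).
    rewrite -/t ler_pdivlMr ?oppr_gt0 // => hh.
    have : 0 <= (W f)%:R - t * - u f by rewrite subr_ge0.
    by rewrite mulrN opprK.
  by rewrite addr_ge0 ?ler0n // mulr_ge0.
have rf1 : r f1 = (W f1)%:R by rewrite /r uf1 mulr0 addr0.
set lam := 1 + \sum_f `|r f|.
have rle f : `|r f| < lam.
  rewrite /lam (bigD1 f) //=.
  have : 0 <= \sum_(g | g != f) `|r g| by apply: sumr_ge0.
  lra.
have lam0 : 0 < lam by apply: le_lt_trans (rle f0).
set q := fun f => r f + lam * (if f \in S' then (W' f)%:R else 0).
have qS' f : f \in S' -> 0 < q f.
  move=> fS'; rewrite /q fS'.
  have h1 : lam <= lam * (W' f)%:R.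
    have hw : 1 <= (W' f)%:R :> rat by rewrite ler1n W'1.
    nra.
  have h2 := lerNnormlW (lexx `|r f|); have h3 := rle f; lra.
have qQ f : f \in S -> f \notin S' -> q f = r f.
  by move=> _ fS'; rewrite /q (negbTE fS') mulr0 addr0.
have qge f : f \in S -> 0 <= q f.
  move=> fS; case fS': (f \in S'); first by rewrite ltW // qS'.
  by rewrite qQ ?fS' // rQ ?fS'.
have qK : ov S q eps *m MQ^T = 0.
  have -> : ov S q eps = ov S (fun f => (W f)%:R) eps + t *: ov S u eps +
                         lam *: ov S' (fun f => (W' f)%:R) eps'.
    apply/matrixP => i f; rewrite !mxE /q /r.
    case fS': (f \in S').
      rewrite (subsetP sub f fS') agree //; ring.
    by case: (f \in S); rewrite ?mulr0 ?addr0 //; ring.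
  by rewrite !mulmxDl -!scalemxAl WK uK W'K !scaler0 !addr0.
set T := [set f in S | 0 < q f].
exists T; split; last first.
  split; first by apply/subsetP => f; rewrite inE => /andP [].
  split; first by apply/eqP => eT; move: (f0S); rewrite -{1}eT inE (qQ _ f0S f0S') r0 ltxx andbF.
  split; first by apply/subsetP => f fS'; rewrite inE (subsetP sub f fS') qS'.
  apply/eqP => eT; move: (f1S'); rewrite {1}eT inE f1S (qQ _ f1S f1S') rf1 ltr0n.
  by rewrite (W1 _ f1S).
have [D [D0 Di]] := scale_int q.
set Wt := fun f => Num.truncn (q f * D%:R).
have WtE f : f \in S -> (Wt f)%:R = q f * D%:R.
  by move=> fS; rewrite int_nat // mulr_ge0 ?ler0n ?qge.
move=> e eT; exists Wt; split.
  move: eT; rewrite inE => /andP [eS qe].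
  by rewrite -(ltr0n rat) WtE // mulr_gt0 // ltr0n.
apply/(wit_transfer _ _ _ TU).
have -> : ov T (fun f => (Wt f)%:R) eps = D%:R *: ov S q eps.
  apply/matrixP => i f; rewrite !mxE inE.
  case fS: (f \in S) => /=; last by rewrite mulr0.
  case: ltrP => qf; first by rewrite WtE //; ring.
  have -> : q f = 0 by apply/eqP; rewrite eq_le qf qge.
  by rewrite !mul0r mulr0.
by rewrite -scalemxAl qK scaler0.
Qed.


Lemma sgnq2 b : sgnq b * sgnq b = 1.
Proof. by case: b; rewrite /sgnq ?mulr1 ?mulrNN ?mulr1. Qed.

Lemma part2 (S S' : {set 'I_n}) eps eps' : totally_unimodular M ->
  strongly_connected M S eps -> strongly_connected M S' eps' ->
  S' \subset S -> (forall e, e \in S' -> eps' e = eps e) -> S' != S ->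
  ~ (exists (T : {set 'I_n}) (tau : 'I_n -> bool),
        strongly_connected M T tau /\ osub_lt S eps T tau /\ osub_lt T tau S' eps') ->
  (\rank (G S) <= (\rank (G S')).+1)%N.
Proof.
move=> TU SCS SCS' sub agree neq nT.
have [W [W1 /(wit_transfer _ _ _ TU) WK]] := pos_witness SCS.
have [W' [W'1 /(wit_transfer _ _ _ TU) W'K]] := pos_witness SCS'.
have pr : S' \proper S by rewrite properEneq neq sub.
have [_ [f1 f1S f1S']] := properP pr.
set p := ov S (fun f => (W f)%:R) eps.
suff sGS : (G S <= G S' + p)%MS.
  apply: leq_trans (mxrankS sGS) _.
  have [h _] := mxrank_adds_leqif (G S') p.
  apply: leq_trans h _; rewrite -[X in (_ <= X)%N]addn1 leq_add2l; exact: rank_leq_row.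
apply/row_subP => i; set y := row i (G S).
have /memG [yK yS] : (y <= G S)%MS := row_sub i (G S).
clearbody y.
case: (boolP (y <= G S' + p)%MS) => // ny; exfalso.
set z := fun f => y 0 f * sgnq (eps f).
have W0 : (W f1)%:R != 0 :> rat by rewrite pnatr_eq0 -lt0n W1.
set c := z f1 / (W f1)%:R.
set d := fun f => z f - c * (W f)%:R.
have dE : ov S d eps = y - c *: p.
  apply/matrixP => k f; rewrite (ord1 k) !mxE.
  case fS: (f \in S); last by rewrite yS ?fS // mulr0 subr0.
  by rewrite /d /z mulrBl -mulrA sgnq2 mulr1 mulrA.
have dK : ov S d eps *m MQ^T = 0 by rewrite dE mulmxBl -scalemxAl yK WK scaler0 subr0.
have d1 : d f1 = 0 by rewrite /d /c mulrVK ?subrr // unitfE.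
case: (boolP [exists f, [&& f \in S, f \notin S' & d f != 0]]); last first.
  rewrite negb_exists => /forallP dz.
  have : (y - c *: p <= G S')%MS.
    apply/memG; split.
      by rewrite mulmxBl -scalemxAl yK WK scaler0 subr0.
    move=> f fS'; rewrite -dE mxE; case fS: (f \in S) => //.
    have := dz f; rewrite fS fS' /= negbK => /eqP ->; by rewrite mul0r.
  move=> h; apply: (negP ny).
  rewrite -(subrK (c *: p) y); apply: addmx_sub_adds => //.
  by apply: scalemx_sub; apply: submx_refl.
case/existsP => f2 /and3P [f2S f2S' df2].
set u := fun f => if d f2 < 0 then d f else - d f.
have uK : ov S u eps *m MQ^T = 0.
  have -> : ov S u eps = if d f2 < 0 then ov S d eps else - ov S d eps.
    apply/matrixP => k f; rewrite /u; case: (d f2 < 0); rewrite !mxE //.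
    by case: (f \in S); rewrite ?mulNr ?oppr0.
  by case: (d f2 < 0); rewrite ?mulNmx dK ?oppr0.
have u1 : u f1 = 0 by rewrite /u d1 oppr0; case: ifP.
have u2 : u f2 < 0.
  rewrite /u; case: ifP => // /negbT; rewrite -leNgt oppr_lt0 => h.
  by rewrite lt_neqAle eq_sym df2 h.
have [T [SCT [TS [TnS [S'T S'nT]]]]] :=
  core TU sub agree W1 WK W'1 W'K uK f1S f1S' u1 f2S f2S' u2.
by apply: nT; exists T, eps; split => //; split => //.
Qed.

End Infra.

Theorem mainTheorem3 (R : realType) (m n : nat) (M : 'M[R]_(m, n)) :
  totally_unimodular M ->
  (forall (S : {set 'I_n}) (eps : 'I_n -> bool)
          (S' : {set 'I_n}) (eps' : 'I_n -> bool),
      strongly_connected M S eps -> strongly_connected M S' eps' ->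
      osub_le S eps S' eps' -> S' \proper S ->
      (osub_genus M S' eps' < osub_genus M S eps)%N)
  /\
  (forall (S : {set 'I_n}) (eps : 'I_n -> bool)
          (S' : {set 'I_n}) (eps' : 'I_n -> bool),
      strongly_connected M S eps -> strongly_connected M S' eps' ->
      sc_covers M S eps S' eps' ->
      sc_degree M S' eps' = sc_degree M S eps + 1).
Proof.
move=> TU; split.
  move=> S eps S' eps' SCS _ _ pr.
  rewrite !(genus_eq _ _ TU); exact: part1 TU SCS pr.
move=> S eps S' eps' SCS SCS' [[[sub agree] neq] nT].
have pr : S' \proper S by rewrite properEneq neq sub.
have h1 := part1 TU SCS pr.
have h2 := part2 TU SCS SCS' sub agree neq nT.
have e : \rank (G M S) = (\rank (G M S')).+1 by apply/eqP; rewrite eqn_leq h1 h2.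
rewrite /sc_degree !(genus_eq _ _ TU) e.
rewrite -addn1 PoszD; ring.
Qed.
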